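(* Let $\mathbb{F}$ be a field and $\mathcal{H}_o=(Q_0,Q_1,\mathbb{B}^{\mathrm{oh}})$ an oriented hypergraph such that, in $F(\mathcal{H}_o)$, all hyperedges share a common nonempty source-side vertex set $S$ and the target-side vertex sets $H_1,\dots,H_r$ ($r=|Q_1|$) of the hyperedges are pairwise distinct. Then the macrograph of $F(\mathcal{H}_o)$ is a star, and $\delta(F(\mathcal{H}_o))>0$ if and only if the indicator vectors $\mathbf{1}_{H_1},\dots,\mathbf{1}_{H_r}\in\mathbb{F}^{Q_0}$ are affinely dependent over $\mathbb{F}$. In particular $\delta(F(\mathcal{H}_o))>0$ implies $r\ge4$.
   Context: An oriented hypergraph is $\mathcal{H}_o=(Q_0,Q_1,\mathbb{B}^{\mathrm{oh}})$ with finite sets $Q_0,Q_1$ and $\mathbb{B}^{\mathrm{oh}}\in\{-1,0,+1\}^{Q_0\times Q_1}$. For a hyperedge $e$, its source-side vertex set is $\{v:\mathbb{B}^{\mathrm{oh}}_{v,e}=-1\}$ and its target-side vertex set is $\{v:\mathbb{B}^{\mathrm{oh}}_{v,e}=+1\}$. $F(\mathcal{H}_o)=(Q_0,Q_1,\beta_F)$ has $\beta_F(\mathbf{1}_e)=(A_e,B_e)$ with $A_e$ the indicator vector (in $\mathbb{F}^{Q_0}=T^1(\mathbb{F}^{Q_0})$) of the source-side set and $B_e$ that of the target-side set. For this data: $\partial_\beta:\mathbf{1}_e\mapsto B_e-A_e$; $V_{\mathrm{macro}}=\{A_e\}\cup\{B_e\}$ (a set); the macrograph is the directed multigraph on $V_{\mathrm{macro}}$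 with edge set $Q_1$ and $e:A_e\to B_e$; $B_{\mathrm{macro}}:\mathbb{F}^{Q_1}\to\mathbb{F}^{V_{\mathrm{macro}}}$, $\mathbf{1}_e\mapsto\mathbf{1}_{B_e}-\mathbf{1}_{A_e}$; $\hat\phi:\mathbb{F}^{V_{\mathrm{macro}}}\to T(\mathbb{F}^{Q_0})$, $\mathbf{1}_w\mapsto w$; $\delta(F(\mathcal{H}_o))=\dim(\mathrm{Im}B_{\mathrm{macro}}\cap\mathrm{Ker}\hat\phi)$. A star is a directed multigraph with one centre vertex and all edges joining the centre to distinct leaves. *)

(* Defs.v *)
From HB Require Import structures.
From mathcomp Require Import all_boot all_order all_algebra.
Set Implicit Arguments. Unset Strict Implicit. Unset Printing Implicit Defensive.
Import Order.TTheory GRing.Theory Num.Theory.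
Local Open Scope ring_scope.

(* Q0 = 'I_n0 (vertices), Q1 = 'I_n1 (hyperedges); vectors in F^{Q0} are
   row vectors 'rV[F]_n0.  Linear maps act on row vectors by right
   multiplication, so images are row spaces and kernels are kermx. *)

Definition ind (F : fieldType) (n0 : nat) (X : {set 'I_n0}) : 'rV[F]_n0 :=
  \row_v ((v \in X)%:R).

Definition src_set (n0 n1 : nat) (B : 'M[int]_(n0, n1)) (e : 'I_n1) : {set 'I_n0} :=
  [set v | B v e == -1].
Definition tgt_set (n0 n1 : nat) (B : 'M[int]_(n0, n1)) (e : 'I_n1) : {set 'I_n0} :=
  [set v | B v e == 1].

Section Macro.
Variables (F : fieldType) (n0 n1 : nat) (A Bt : 'I_n1 -> 'rV[F]_n0).

Definition Vmacro : seq 'rV[F]_n0 :=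
  undup ([seq A e | e <- enum 'I_n1] ++ [seq Bt e | e <- enum 'I_n1]).

(* B_macro : F^{Q1} -> F^{V_macro}, 1_e |-> 1_{B_e} - 1_{A_e} *)
Definition Bmacro : 'M[F]_(n1, size Vmacro) :=
  \matrix_(e, i) (((i : nat) == index (Bt e) Vmacro)%:R
                  - ((i : nat) == index (A e) Vmacro)%:R).

(* phi-hat : F^{V_macro} -> F^{Q0} (= T^1(F^{Q0})), 1_w |-> w *)
Definition phihat : 'M[F]_(size Vmacro, n0) :=
  \matrix_(i, j) (nth 0 Vmacro i) 0 j.

Definition delta : nat := \rank (Bmacro :&: kermx phihat)%MS.
End Macro.

Definition is_star (T : eqType) (V : seq T) (E : finType) (s t : E -> T) : Prop :=
  exists2 c, c \in V &
    [/\ forall e, s e \in V /\ t e \in V,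
        forall e, (s e == c) (+) (t e == c),
        injective (fun e => if s e == c then t e else s e) &
        forall v, v \in V -> v = c \/ exists e, v = (if s e == c then t e else s e)].

Definition affinely_dependent (F : fieldType) (n r : nat) (x : 'I_r -> 'rV[F]_n) : Prop :=
  exists c : 'I_r -> F, [/\ exists i, c i != 0, \sum_i c i = 0 & \sum_i c i *: x i = 0].

Definition srcvec (F : fieldType) n0 n1 (B : 'M[int]_(n0, n1)) (e : 'I_n1) : 'rV[F]_n0 :=
  ind F (src_set B e).
Definition tgtvec (F : fieldType) n0 n1 (B : 'M[int]_(n0, n1)) (e : 'I_n1) : 'rV[F]_n0 :=
  ind F (tgt_set B e).

(* Main.v *)
Require Import Defs.
From HB Require Import structures.
From mathcomp Require Import all_boot all_order all_algebra zify.
Set Implicit Arguments. Unset Strict Implicit. Unset Printing Implicit Defensive.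
Import GRing.Theory.
Local Open Scope ring_scope.

Lemma rank_cap_pos (F : fieldType) (m1 m2 n : nat) (A : 'M[F]_(m1, n)) (K : 'M[F]_(m2, n)) :
  (0 < \rank (A :&: K)%MS)%N <-> exists w : 'rV[F]_n, [/\ w != 0, (w <= A)%MS & (w <= K)%MS].
Proof.
split.
  rewrite lt0n mxrank_eq0 => nz.
  have [i Hi] : exists i, row i (A :&: K)%MS != 0.
    apply/existsP; apply: contraNT nz; rewrite negb_exists => /forallP H.
    apply/eqP/row_matrixP => i; rewrite row0; exact/eqP/negPn/H.
  exists (row i (A :&: K)%MS); split => //.
    exact: submx_trans (row_sub _ _) (capmxSl _ _).
  exact: submx_trans (row_sub _ _) (capmxSr _ _).
case=> w [wn0 wA wK].
have : (w <= A :&: K)%MS by rewrite sub_capmx wA wK.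
move/mxrankS; apply: leq_trans.
by rewrite lt0n mxrank_eq0.
Qed.

Section Gen.
Variables (F : fieldType) (n0 n1 : nat) (A Bt : 'I_n1 -> 'rV[F]_n0) (c : 'rV[F]_n0).
Hypotheses (hA : forall e, A e = c) (hinj : injective Bt) (hne : forall e, Bt e != c)
  (hn1 : (0 < n1)%N).
Local Notation V := (Vmacro A Bt).

Lemma c_in : c \in V.
Proof.
rewrite mem_undup mem_cat; apply/orP; left; apply/mapP.
by exists (Ordinal hn1); rewrite ?mem_enum ?hA.
Qed.

Lemma b_in e : Bt e \in V.
Proof.
rewrite mem_undup mem_cat; apply/orP; right; apply/mapP.
by exists e; rewrite ?mem_enum.
Qed.

Lemma idx_lt w : w \in V -> (index w V < size V)%N.
Proof. by rewrite index_mem. Qed.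

Definition kc : 'I_(size V) := Ordinal (idx_lt c_in).
Definition kb e : 'I_(size V) := Ordinal (idx_lt (b_in e)).

Lemma rowM e : row e (Bmacro A Bt) = delta_mx 0 (kb e) - delta_mx 0 kc.
Proof.
apply/rowP => i; rewrite !mxE hA eqxx /=.
by [].
Qed.

Lemma rowP_ k : row k (phihat A Bt) = nth 0 V k.
Proof. by apply/rowP => j; rewrite !mxE. Qed.

Lemma MP (x : 'rV[F]_n1) : x *m Bmacro A Bt *m phihat A Bt = \sum_e x 0 e *: (Bt e - c).
Proof.
rewrite -mulmxA mulmx_sum_row; apply: eq_bigr => e _.
rewrite row_mul rowM mulmxBl -!rowE !rowP_ /= (nth_index 0 (b_in e)) (nth_index 0 c_in) //.
Qed.

Lemma kb_inj : injective kb.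
Proof.
move=> e e' /(congr1 val) /= h.
apply: hinj; rewrite -(nth_index 0 (b_in e)) h nth_index //; exact: b_in.
Qed.

Lemma kb_kc e : kb e != kc.
Proof.
apply/negP => /eqP /(congr1 val) /= h.
move: (hne e); rewrite -(nth_index 0 (b_in e)) h nth_index ?eqxx //; exact: c_in.
Qed.

Lemma Mkb e e' : Bmacro A Bt e' (kb e) = (e' == e)%:R.
Proof.
rewrite mxE hA.
have -> : ((kb e : nat) == index c V) = (kb e == kc) by [].
have -> : ((kb e : nat) == index (Bt e') V) = (kb e == kb e') by [].
by rewrite (negbTE (kb_kc e)) subr0 (inj_eq kb_inj) eq_sym.
Qed.

Lemma xM0 (x : 'rV[F]_n1) : x *m Bmacro A Bt = 0 -> x = 0.
Proof.
move=> h; apply/rowP => e; rewrite [RHS]mxE.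
have := congr1 (fun M : 'M[F]_(1, size V) => M 0 (kb e)) h.
rewrite [LHS]mxE [RHS]mxE => <-.
rewrite (bigD1 e) //= big1 ?addr0.
  by rewrite Mkb eqxx mulr1.
by move=> e' ne; rewrite Mkb (negbTE ne) mulr0.
Qed.

Lemma delta_pos_iff :
  (0 < delta A Bt)%N <-> exists x : 'rV[F]_n1, x != 0 /\ \sum_e x 0 e *: (Bt e - c) = 0.
Proof.
rewrite /delta; split.
  move/rank_cap_pos; case=> w [wn0 /submxP [x wE]]; rewrite sub_kermx wE => /eqP h; subst w.
  exists x; split; last by rewrite -MP.
  by apply: contraNneq wn0 => ->; rewrite mul0mx.
case=> x [xn0 h]; apply/rank_cap_pos; exists (x *m Bmacro A Bt); split.
- by apply/negP => /eqP /xM0 /eqP; apply/negP.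
- exact: submxMl.
- by rewrite sub_kermx MP h.
Qed.
End Gen.

Lemma ind_inj (F : fieldType) n0 (X Y : {set 'I_n0}) : ind F X = ind F Y -> X = Y.
Proof.
move=> h; apply/setP => v; have := congr1 (fun r : 'rV[F]_n0 => r 0 v) h; rewrite !mxE.
case: (v \in X); case: (v \in Y) => //= /eqP; by rewrite ?oner_eq0 // eq_sym oner_eq0.
Qed.

Lemma noSplit (F : fieldType) n1 (cf : 'I_n1 -> F) (T : {set 'I_n1}) i j :
  cf i != 0 -> cf j != 0 -> i \in T -> j \notin T ->
  \sum_(l in T) cf l = 0 -> \sum_(l in ~: T) cf l = 0 -> (n1 <= 3)%N -> False.
Proof.
move=> ci cj iT jT sT sC n3.
have hc := cardsC T; rewrite card_ord in hc.
have c1 : (0 < #|T|)%N by apply/card_gt0P; exists i.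
have c2 : (0 < #|~: T|)%N by apply/card_gt0P; exists j; rewrite in_setC.
have [e1|e1] : #|T| = 1%N \/ #|~: T| = 1%N by lia.
  move/eqP/cards1P: e1 => [k Tk]; move: iT sT; rewrite Tk big_set1 inE => /eqP <- /eqP.
  by rewrite (negbTE ci).
move/eqP/cards1P: e1 => [k Tk].
have : j \in ~: T by rewrite in_setC.
move: sC; rewrite Tk big_set1 inE => /eqP + /eqP ek; rewrite -ek (negbTE cj) //.
Qed.

Theorem proposition7p9 (F : fieldType) (n0 n1 : nat) (B : 'M[int]_(n0, n1)) :
  (forall v e, B v e \in [:: -1; 0; 1]) ->
  (0 < n1)%N ->
  (exists S : {set 'I_n0}, S != set0 /\ forall e, src_set B e = S) ->
  injective (tgt_set B) ->
  [/\ is_star (Vmacro (srcvec F B) (tgtvec F B)) (srcvec F B) (tgtvec F B),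
      (0 < delta (srcvec F B) (tgtvec F B))%N <-> affinely_dependent (tgtvec F B)
    & (0 < delta (srcvec F B) (tgtvec F B))%N -> (4 <= n1)%N].
Proof.
move=> _ hn1 [S [Sn0 hS]] hinj.
have hA : forall e, srcvec F B e = ind F S by move=> e; rewrite /srcvec hS.
have hbinj : injective (tgtvec F B) by move=> e e' /ind_inj /hinj.
have [v0 v0S] := set0Pn _ Sn0.
have notin_tgt : forall e, v0 \notin tgt_set B e.
  move=> e; have : v0 \in src_set B e by rewrite hS.
  by rewrite !inE => /eqP ->.
have hne : forall e, tgtvec F B e != ind F S.
  move=> e; apply/negP => /eqP /(congr1 (fun r : 'rV[F]_n0 => r 0 v0)).
  rewrite /tgtvec !mxE v0S (negbTE (notin_tgt e)) => /eqP; by rewrite eq_sym oner_eq0.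
have hAff : (exists x : 'rV[F]_n1, x != 0 /\ \sum_e x 0 e *: (tgtvec F B e - ind F S) = 0)
    <-> affinely_dependent (tgtvec F B).
  split.
    case=> x [xn0 hx].
    have sx : \sum_e x 0 e = 0.
      have := congr1 (fun r : 'rV[F]_n0 => r 0 v0) hx; rewrite summxE [RHS]mxE.
      under eq_bigr do rewrite !mxE (negbTE (notin_tgt _)) v0S sub0r mulrN1.
      by rewrite sumrN => /eqP; rewrite oppr_eq0 => /eqP.
    exists (fun e => x 0 e); split => //.
      case: (pickP (fun e => x 0 e != 0)) => [e he|h0]; first by exists e.
      move: xn0; have -> : x = 0; last by rewrite eqxx.
      by apply/rowP => j; rewrite [RHS]mxE; have := h0 j => /negbFE/eqP.
    have -> : \sum_e x 0 e *: tgtvec F B e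
        = \sum_e x 0 e *: (tgtvec F B e - ind F S) + (\sum_e x 0 e) *: ind F S.
      by rewrite scaler_suml -big_split; apply: eq_bigr => e _; rewrite /= scalerBr subrK.
    by rewrite hx sx scale0r addr0.
  case=> cf [[i ci] s0 sb]; exists (\row_e cf e); split.
    apply/negP => /eqP /(congr1 (fun r : 'rV[F]_n1 => r 0 i)); rewrite !mxE.
    by move/eqP; rewrite (negbTE ci).
  transitivity (\sum_e cf e *: tgtvec F B e - (\sum_e cf e) *: ind F S).
    by rewrite scaler_suml -sumrB; under eq_bigr do rewrite mxE scalerBr.
  by rewrite sb s0 scale0r subr0.
have h4 : affinely_dependent (tgtvec F B) -> (4 <= n1)%N.
  case=> cf [[i ci] s0 sb]; rewrite leqNgt; apply/negP => n3; rewrite ltnS in n3.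
  have [j [ji cj]] : exists j, j != i /\ cf j != 0.
    case: (pickP (fun j => (j != i) && (cf j != 0))) => [j /andP [? ?]|h0]; first by exists j.
    move: s0; rewrite (bigD1 i) //= big1 ?addr0 => [/eqP|]; first by rewrite (negbTE ci).
    by move=> j ji; have := h0 j; rewrite ji /= => /negbFE/eqP.
  move/negP: ji; apply; apply/eqP/hinj/setP => v.
  pose T := [set l | v \in tgt_set B l].
  have E l : (l \in T) = (v \in tgt_set B l) by rewrite inE.
  have sT : \sum_(l in T) cf l = 0.
    have := congr1 (fun r : 'rV[F]_n0 => r 0 v) sb; rewrite summxE [RHS]mxE => h; apply: etrans h.
    rewrite big_mkcond /=; apply: eq_bigr => l _; rewrite mxE /tgtvec /ind mxE E.
    by case: (v \in _); rewrite ?mulr1 ?mulr0.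
  have sC : \sum_(l in ~: T) cf l = 0.
    move: s0; rewrite (bigID (fun l => l \in T)) /= sT add0r => h; apply: etrans h.
    by apply: eq_bigl => l; rewrite in_setC.
  rewrite -!E; case iT: (i \in T); case jT: (j \in T) => //; exfalso.
    exact: (noSplit ci cj iT (negbT jT) sT sC n3).
  exact: (noSplit cj ci jT (negbT iT) sT sC n3).
split.
- exists (ind F S); first exact: (c_in (tgtvec F B) hA hn1).
  split.
  + move=> e; split; [rewrite hA; exact: (c_in (tgtvec F B) hA hn1) | exact: b_in].
  + by move=> e; rewrite hA eqxx (negbTE (hne e)).
  + by move=> e e' /=; rewrite !hA eqxx => /hbinj.
  + move=> w; rewrite mem_undup mem_cat => /orP [/mapP [e _ ->] | /mapP [e _ ->]].
      by left; exact: hA.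
    by right; exists e; rewrite hA eqxx.
- by rewrite (delta_pos_iff hA hbinj hne hn1).
- by move/(delta_pos_iff hA hbinj hne hn1)/hAff.
Qed.
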